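(* Let $n\ge p$, $\nu>0$, $\boldsymbol\eta\in\mathbb R^p$ with $\max_j\eta_j<1$, and fix $d_2,\dots,d_p>0$. Let $g_1(d_1)=\exp(\nu\eta_1d_1)/\left[{}_0F_1\!\left(\tfrac n2,\tfrac{D^2}{4}\right)\right]^\nu$ (with $D=\mathrm{diag}(d_1,d_2,\dots,d_p)$) be the unnormalized conditional density of $d_1$ given $(d_2,\dots,d_p)$ under IMDY$(\nu,\boldsymbol\eta)$, and let $m$ be its mode. Then for every $b>0$, the function $Q(d_1)=g_1(d_1+b)/g_1(d_1)$ is strictly decreasing for $d_1>m$.
   Context: $\mathcal V_{n,p}=\{X\in\mathbb R^{n\times p}:X^TX=I_p\}$ with normalized Haar probability measure $[dX]$; ${}_0F_1\!\left(\tfrac n2,\tfrac{D^2}{4}\right)=\int_{\mathcal V_{n,p}}\exp\big(\sum_j d_jX_{jj}\big)[dX]$. IMDY$(\nu,\boldsymbol\eta)$ is the distribution on $\mathbb R_+^p$ with Lebesgue density proportional to $\exp(\nu\boldsymbol\eta^T\boldsymbol d)/[{}_0F_1(\tfrac n2,\tfrac{D^2}4)]^\nu$. *)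

(* Defs.v *)
From HB Require Import structures.
From mathcomp Require Import all_boot all_order all_algebra.
From mathcomp Require Import all_classical all_reals all_analysis.
Set Implicit Arguments. Unset Strict Implicit. Unset Printing Implicit Defensive.
Import Order.TTheory GRing.Theory Num.Theory.
Local Open Scope classical_set_scope.
Local Open Scope ring_scope.

(* Real n x p matrices, as a measurable space whose sigma-algebra is the one
   generated by the n*p coordinate maps (= Borel sigma-algebra of R^{n x p}). *)
Definition rmat (R : realType) (n p : nat) : Type := 'M[R]_(n, p).

HB.instance Definition _ (R : realType) n p := Choice.on (rmat R n p).
HB.instance Definition _ (R : realType) n p :=
  isPointed.Build (rmat R n p) (0 : 'M[R]_(n, p)).

Section rmat_measurable.
Context (R : realType) (n p : nat).

Definition rmat_measurable : set (set (rmat R n p)) :=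
  <<s \bigcup_(ij in [set: 'I_n * 'I_p])
        preimage_set_system setT (fun X : rmat R n p => X ij.1 ij.2)
          (@measurable _ R) >>.

Let rmat_set0 : rmat_measurable set0.
Proof. exact: (@sigma_algebra0 _ setT). Qed.
Let rmat_setC A : rmat_measurable A ->
  rmat_measurable (~` A).
Proof. move=> hA; rewrite -setTD; exact: (sigma_algebraCD hA). Qed.
Let rmat_bigcup (F : _^nat) : (forall i, rmat_measurable (F i)) ->
  rmat_measurable (\bigcup_i (F i)).
Proof. exact: sigma_algebra_bigcup. Qed.

HB.instance Definition _ := @isMeasurable.Build default_measure_display
  (rmat R n p) (rmat_measurable) rmat_set0 rmat_setC rmat_bigcup.
End rmat_measurable.

Section IMDY.
Context (R : realType).

Definition stiefel (n p : nat) : set (rmat R n p) :=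
  [set X | X^T *m X = 1%:M].

(* mu is the normalized Haar (uniform) probability measure [dX] on V_{n,p}:
   a probability measure carried by V_{n,p} and invariant under the left
   action X |-> Q X of the orthogonal group O(n).  (For p <= n such a measure
   exists and is unique.) *)
Definition stiefel_haar (n p : nat) (mu : probability (rmat R n p) R) : Prop :=
  mu.-negligible (~` @stiefel n p) /\
  forall Q : 'M[R]_n, Q^T *m Q = 1%:M ->
    forall A : set (rmat R n p), measurable A ->
      mu ((fun X : rmat R n p => (Q *m X : rmat R n p)) @^-1` A) = mu A.

(* 0F1(n/2, D^2/4) = \int_{V_{n,p}} exp(sum_j d_j X_jj) [dX], D = diag(d). *)
Definition hyp0F1 (n p : nat) (mu : probability (rmat R n p) R)
    (d : 'I_p -> R) : R :=
  Rintegral mu setT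
    (fun X : rmat R n p =>
       expR (\sum_(i < n) \sum_(j < p | (i == j :> nat)) d j * X i j)).

(* diag(d_1, d_2, ..., d_p) with d_1 := x and (d_2, ..., d_p) := dr 1, ..., dr q *)
Definition dvec (q : nat) (x : R) (dr : 'I_q.+1 -> R) : 'I_q.+1 -> R :=
  fun j => if j == ord0 then x else dr j.

Definition g1 (n q : nat) (mu : probability (rmat R n q.+1) R) (nu : R)
    (eta : 'I_q.+1 -> R) (dr : 'I_q.+1 -> R) (x : R) : R :=
  expR (nu * eta ord0 * x) / (hyp0F1 mu (dvec x dr)) `^ nu.

Definition is_mode (f : R -> R) (m : R) : Prop :=
  0 <= m /\ forall x, 0 <= x -> f x <= f m.

End IMDY.

(* Main.v *)
Require Import Defs.
From mathcomp Require Import all_boot all_order all_algebra.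
From mathcomp Require Import fingroup perm.
From mathcomp Require Import all_classical all_reals all_analysis.
From mathcomp Require Import measurable_realfun lebesgue_integral_theory.lebesgue_integrable.
From mathcomp Require Import ring lra.
Import Order.TTheory GRing.Theory Num.Theory.
Set Implicit Arguments. Unset Strict Implicit. Unset Printing Implicit Defensive.
Local Open Scope classical_set_scope.
Local Open Scope ring_scope.

Lemma bint d (T : measurableType d) (R : realType) (mu : probability T R)
  (D : set T) (f : T -> R) (M : R) :
  measurable D -> measurable_fun setT f -> (forall z, D z -> `|f z| <= M) ->
  mu.-integrable D (EFin \o f).
Proof.
move=> mD mf bf; apply: measurable_bounded_integrable => //.
- by rewrite (le_lt_trans (probability_le1 mu mD)) ?ltry.
- exact: measurable_funS mf.
rewrite /bounded_near; near=> K => z Dz /=.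
apply: le_trans (bf z Dz) _.
by near: K; apply: nbhs_pinfty_ge; rewrite num_real.
Unshelve. all: end_near. Qed.

Lemma pos_int d (T : measurableType d) (R : realType) (mu : probability T R)
  (D A : set T) (f : T -> R) :
  measurable D -> measurable A -> A `<=` D -> measurable_fun setT f ->
  (forall z, D z -> 0 <= f z) -> (forall z, A z -> 0 < f z) ->
  (0 < mu A)%E -> mu.-integrable D (EFin \o f) ->
  0 < \int[mu]_(z in D) f z.
Proof.
move=> mD mA AD mf f0 fA muA intf.
have mfe : measurable_fun A (fun z => (f z)%:E).
  by apply/measurable_EFinP; exact: measurable_funS mf.
have iA : (0 < \int[mu]_(z in A) (f z)%:E)%E.
  rewrite lt0e integral_ge0 ?andbT; last by move=> z Az; rewrite lee_fin ltW// fA.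
  apply/negP => /eqP i0.
  have : (\int[mu]_(z in A) `|(EFin \o f) z| = 0)%E.
    rewrite -i0; apply: eq_integral => z /[!inE] Az /=; rewrite /comp.
    by rewrite ger0_norm// ltW// fA.
  move/(ae_eq_integral_abs mu mA mfe) => [N [mN N0 sN]].
  have : (mu A <= mu N)%E.
    apply: le_measure; rewrite ?inE//.
    move=> z Az; apply: sN => /= /(_ Az) /= [] /eqP; by rewrite gt_eqF// fA.
  by rewrite N0 leNgt muA.
have iD : (0 < \int[mu]_(z in D) (f z)%:E)%E.
  apply: lt_le_trans iA _; apply: ge0_subset_integral => //.
  by apply/measurable_EFinP; exact: measurable_funS mf.
rewrite /Rintegral fine_gt0// iD/= ltey_eq.
by rewrite (integrable_fin_num mD intf).
Qed.


Definition Hexp {R : realType} (x y b U V W1 W2 : R) :=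
  expR (x*U+W1) * expR((y+b)*V+W2) + expR((y+b)*U+W1)*expR(x*V+W2)
  - (expR((x+b)*U+W1)*expR(y*V+W2) + expR(y*U+W1)*expR((x+b)*V+W2)).

Lemma Hfact (R : realType) (x y b U V W1 W2 : R) :
  Hexp x y b U V W1 W2 = expR W1 * expR W2 *
    ((expR (x*U + y*V) - expR (y*U + x*V)) * (expR (b*V) - expR (b*U))).
Proof. rewrite /Hexp !expRD !mulrDl !expRD; ring. Qed.

Lemma Hpos (R : realType) (x y b U V W1 W2 : R) :
  x < y -> 0 < b -> U < V -> 0 < Hexp x y b U V W1 W2.
Proof.
move=> xy b0 UV; rewrite Hfact.
apply: mulr_gt0; first by apply: mulr_gt0; exact: expR_gt0.
apply: mulr_gt0; rewrite subr_gt0 ltr_expR; first nra.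
by rewrite ltr_pM2l.
Qed.

Lemma Hsym (R : realType) (x y b U V W1 W2 : R) :
  Hexp x y b U V W1 W2 = Hexp x y b V U W2 W1.
Proof. rewrite /Hexp; ring. Qed.

Lemma Hge0 (R : realType) (x y b U V W1 W2 : R) :
  x < y -> 0 < b -> 0 <= Hexp x y b U V W1 W2.
Proof.
move=> xy b0; have [UV|VU|->] := ltgtP U V.
- exact/ltW/Hpos.
- by rewrite Hsym; exact/ltW/Hpos.
- rewrite Hfact [y * V + _]addrC subrr mul0r mulr0 //.
Qed.

Section lin.
Local Open Scope ring_scope.
Lemma intZ d (T : measurableType d) (R : realType) (mu : {measure set T -> \bar R})
  (D : set T) (f : T -> R) (a : R) : measurable D ->
  mu.-integrable D (EFin \o f) -> mu.-integrable D (EFin \o (fun z => a * f z)).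
Proof.
move=> mD hf; apply: eq_integrable (integrableZl mD a hf) => //.
Qed.

Lemma intD d (T : measurableType d) (R : realType) (mu : {measure set T -> \bar R})
  (D : set T) (f g : T -> R) : measurable D ->
  mu.-integrable D (EFin \o f) -> mu.-integrable D (EFin \o g) ->
  mu.-integrable D (EFin \o (fun z => f z + g z)).
Proof.
move=> mD hf hg; apply: eq_integrable (integrableD mD hf hg) => //.
Qed.

Lemma intB d (T : measurableType d) (R : realType) (mu : {measure set T -> \bar R})
  (D : set T) (f g : T -> R) : measurable D ->
  mu.-integrable D (EFin \o f) -> mu.-integrable D (EFin \o g) ->
  mu.-integrable D (EFin \o (fun z => f z - g z)).
Proof.
move=> mD hf hg; apply: eq_integrable (integrableB mD hf hg) => //.
Qed.

Lemma lin4 d (T : measurableType d) (R : realType) (mu : {measure set T -> \bar R})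
  (D : set T) (f1 f2 f3 f4 : T -> R) (a1 a2 a3 a4 : R) : measurable D ->
  mu.-integrable D (EFin \o f1) -> mu.-integrable D (EFin \o f2) ->
  mu.-integrable D (EFin \o f3) -> mu.-integrable D (EFin \o f4) ->
  mu.-integrable D (EFin \o (fun z => a1 * f1 z + a2 * f2 z - (a3 * f3 z + a4 * f4 z))) /\
  \int[mu]_(z in D) (a1 * f1 z + a2 * f2 z - (a3 * f3 z + a4 * f4 z)) =
  a1 * \int[mu]_(z in D) f1 z + a2 * \int[mu]_(z in D) f2 z
   - (a3 * \int[mu]_(z in D) f3 z + a4 * \int[mu]_(z in D) f4 z).
Proof.
move=> mD i1 i2 i3 i4.
have j1 := intZ a1 mD i1; have j2 := intZ a2 mD i2.
have j3 := intZ a3 mD i3; have j4 := intZ a4 mD i4.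
have k12 := intD mD j1 j2; have k34 := intD mD j3 j4.
split; first exact: intB.
rewrite (RintegralB mD k12 k34) (RintegralD mD j1 j2) (RintegralD mD j3 j4).
by rewrite (RintegralZl _ mD i1) (RintegralZl _ mD i2) (RintegralZl _ mD i3) (RintegralZl _ mD i4).
Qed.

Lemma mlin4 d (T : measurableType d) (R : realType)
  (f1 f2 f3 f4 : T -> R) (a1 a2 a3 a4 : R) :
  measurable_fun setT f1 -> measurable_fun setT f2 ->
  measurable_fun setT f3 -> measurable_fun setT f4 ->
  measurable_fun setT (fun z => a1 * f1 z + a2 * f2 z - (a3 * f3 z + a4 * f4 z)).
Proof.
move=> m1 m2 m3 m4.
by apply: measurable_funB; apply: measurable_funD; apply: measurable_funM.
Qed.
End lin.

Lemma mset_lt d (T : measurableType d) (R : realType) (D : set T) (u : T -> R) (c : R) :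
  measurable D -> measurable_fun setT u ->
  measurable (D `&` [set z | u z < c]) /\ measurable (D `&` [set z | c < u z]).
Proof.
move=> mD mu_; split; apply: measurableI => //.
- have := mu_ measurableT _ (measurable_itv `]-oo, c[); rewrite setTI.
  by congr measurable; apply/seteqP; split => z /=; rewrite in_itv.
- have := mu_ measurableT _ (measurable_itv `]c, +oo[); rewrite setTI.
  by congr measurable; apply/seteqP; split => z /=; rewrite in_itv /= andbT.
Qed.

Section key.
Variables (d : measure_display) (T : measurableType d) (R : realType).
Variables (mu : probability T R) (D : set T) (u w : T -> R) (Mu Mw : R).
Hypotheses (mD : measurable D) (mu_ : measurable_fun setT u) (mw : measurable_fun setT w).
Hypotheses (bu : forall z, D z -> `|u z| <= Mu) (bw : forall z, D z -> `|w z| <= Mw).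
Hypotheses (Aneg : (0 < mu (D `&` [set z | (u z < 0)%R]))%E)
           (Apos : (0 < mu (D `&` [set z | (0 < u z)%R]))%E).

Let phi (t : R) := fun z => expR (t * u z + w z).

Let mphi t : measurable_fun setT (phi t).
Proof.
apply: measurableT_comp => //; apply: measurable_funD => //.
exact: measurable_funM.
Qed.

Let bphi t z : D z -> `|phi t z| <= expR (`|t| * Mu + Mw).
Proof.
move=> Dz; rewrite ger0_norm ?expR_ge0// ler_expR lerD //.
  apply: le_trans (ler_norm _) _; rewrite normrM ler_wpM2l//; exact: bu.
apply: le_trans (ler_norm _) _; exact: bw.
Qed.

Let iphi t : mu.-integrable D (EFin \o phi t).
Proof. have := @bint _ _ _ mu _ _ _ mD (mphi t) (bphi t). move=> h; exact h. Qed.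

Lemma F_pos t : 0 < \int[mu]_(z in D) expR (t * u z + w z).
Proof.
have [mA _] := mset_lt 0 mD mu_.
have := @pos_int _ _ _ mu D _ (phi t) mD mA (@subIsetl _ _ _) (mphi t).
apply => //.
- by move=> z _; exact: expR_ge0.
- by move=> z _; exact: expR_gt0.
Qed.

Let F t := \int[mu]_(z in D) expR (t * u z + w z).
Lemma F_key x y b : x < y -> 0 < b ->
  F (x + b) * F y < F x * F (y + b).
Proof.
move=> xy b0.
have [mAn _] := mset_lt 0 mD mu_.
have [_ mAp] := mset_lt 0 mD mu_.
pose H z v := phi x z * phi (y+b) v + phi (y+b) z * phi x v
             - (phi (x+b) z * phi y v + phi y z * phi (x+b) v).
have HE z v : H z v = Hexp x y b (u z) (u v) (w z) (w v).
  by rewrite /H /phi /Hexp.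
pose G z := F (y+b) * phi x z + F x * phi (y+b) z
             - (F y * phi (x+b) z + F (x+b) * phi y z).
have GE z : G z = \int[mu]_(v in D) H z v.
  have [_ ->] := lin4 (phi x z) (phi (y+b) z) (phi (x+b) z) (phi y z)
     mD (iphi (y+b)) (iphi x) (iphi y) (iphi (x+b)).
  rewrite /G /F /phi; ring.
have Hint z : mu.-integrable D (EFin \o H z).
  by have [+ _] := lin4 (phi x z) (phi (y+b) z) (phi (x+b) z) (phi y z)
     mD (iphi (y+b)) (iphi x) (iphi y) (iphi (x+b)).
have Hm z : measurable_fun setT (H z).
  by apply: mlin4; apply: mphi.
have G0 z : 0 <= G z.
  by rewrite GE; apply: Rintegral_ge0 => v _; rewrite HE; exact: Hge0.
have Gp z : u z < 0 -> 0 < G z.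
  move=> uz; rewrite GE.
  have := @pos_int _ _ _ mu D _ (H z) mD mAp (@subIsetl _ _ _) (Hm z).
  apply => //.
  - by move=> v _; rewrite HE; exact: Hge0.
  - move=> v [_ /= uv]; rewrite HE; apply: Hpos => //.
    exact: lt_trans uz uv.
have [Gi GI] := lin4 (F (y+b)) (F x) (F y) (F (x+b))
     mD (iphi x) (iphi (y+b)) (iphi (x+b)) (iphi y).
have : 0 < \int[mu]_(z in D) G z.
  have := @pos_int _ _ _ mu D _ G mD mAn (@subIsetl _ _ _).
  apply => //.
  - by apply: mlin4; apply: mphi.
  - by move=> z [_ /= uz]; exact: Gp.
rewrite /G GI -/(F x) -/(F y) -/(F (x+b)) -/(F (y+b)) => h.
nra.
Qed.
End key.

Lemma final_alg (R : realType) (nu c x y b Fx Fy Fxb Fyb : R) :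
  0 < nu -> 0 < Fx -> 0 < Fy -> 0 < Fxb -> 0 < Fyb -> Fxb * Fy < Fx * Fyb ->
  expR (c * (y + b)) / Fyb `^ nu / (expR (c * y) / Fy `^ nu) <
  expR (c * (x + b)) / Fxb `^ nu / (expR (c * x) / Fx `^ nu).
Proof.
move=> nu0 x0 y0 xb0 yb0 h.
have P t : 0 < t -> 0 < t `^ nu by move=> t0; exact: powR_gt0.
have Ey := expR_gt0 (c * y); have Ex := expR_gt0 (c * x).
have Eb := expR_gt0 (c * b).
have Px := P _ x0; have Py := P _ y0; have Pxb := P _ xb0; have Pyb := P _ yb0.
have key : Fy `^ nu * Fxb `^ nu < Fx `^ nu * Fyb `^ nu.
  rewrite -!powRM ?ltW//; apply: gt0_ltr_powR; rewrite ?nnegrE ?mulr_ge0 ?ltW//.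
  by rewrite mulrC.
rewrite !mulrDr !expRD.
have -> : expR (c * y) * expR (c * b) / Fyb `^ nu / (expR (c * y) / Fy `^ nu) =
   expR (c * b) * (Fy `^ nu / Fyb `^ nu).
  field; rewrite ?gt_eqF//.
have -> : expR (c * x) * expR (c * b) / Fxb `^ nu / (expR (c * x) / Fx `^ nu) =
   expR (c * b) * (Fx `^ nu / Fxb `^ nu).
  field; rewrite ?gt_eqF//.
rewrite ltr_pM2l// ltr_pdivlMr// mulrAC ltr_pdivrMr//.
Qed.

Lemma coord_mfun (R : realType) n p (i : 'I_n) (j : 'I_p) :
  measurable_fun setT (fun X : rmat R n p => X i j).
Proof.
move=> _ B mB; rewrite setTI.
apply: sub_sigma_algebra; exists (i, j) => //.
by exists B => //; rewrite setTI.
Qed.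

Definition Sd (R : realType) n p (c : 'I_p -> R) (X : rmat R n p) : R :=
  \sum_(i < n) \sum_(j < p | (i == j :> nat)) c j * X i j.

Lemma msum d (T : measurableType d) (R : realType) (I : Type) (s : seq I) (P : pred I)
  (h : I -> T -> R) : (forall i, measurable_fun setT (h i)) ->
  measurable_fun setT (fun x => \sum_(i <- s | P i) h i x).
Proof.
move=> mh; elim: s => [|a s IH].
  by under eq_fun do rewrite big_nil; exact: measurable_cst.
under eq_fun do rewrite big_cons.
case: (P a) => //; exact: measurable_funD.
Qed.

Lemma Sd_mfun (R : realType) n p (c : 'I_p -> R) :
  measurable_fun setT (Sd c : rmat R n p -> R).
Proof.
apply: msum => i; apply: msum => j.
by apply: measurable_funM => //; exact: coord_mfun.
Qed.

Lemma Sd_dvec (R : realType) n q (x : R) (dr : 'I_q.+1 -> R) (X : rmat R n.+1 q.+1) :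
  Sd (dvec x dr) X = x * X ord0 ord0 + Sd (dvec 0 dr) X.
Proof.
rewrite /Sd.
have -> : \sum_(i < n.+1) \sum_(j < q.+1 | (i == j :> nat)) dvec x dr j * X i j =
  \sum_(i < n.+1) \sum_(j < q.+1 | (i == j :> nat))
     ((if j == ord0 then x else 0) * X i j + dvec 0 dr j * X i j).
  apply: eq_bigr => i _; apply: eq_bigr => j _; rewrite /dvec.
  by case: ifP => _; rewrite ?mul0r ?add0r ?addr0.
under eq_bigr do rewrite big_split /=.
rewrite big_split /=; congr (_ + _).
rewrite big_ord_recl /= addrC big1 ?add0r; last first.
  move=> i _; apply: big1 => j /eqP ij; case: eqP => [j0|_]; last by rewrite mul0r.
  by move: ij; rewrite j0.
rewrite (big_pred1 (ord0 : 'I_q.+1)); last by move=> j /=; rewrite eq_sym.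
by rewrite eqxx.
Qed.

Lemma stiefel_le1 (R : realType) n p (X : rmat R n p) :
  stiefel X -> forall i j, `|X i j| <= 1.
Proof.
rewrite /stiefel /= => hX i j.
have := congr1 (fun M : 'M[R]_p => M j j) hX => /=.
rewrite !mxE eqxx /= (bigD1 i) //= => h.
have : 0 <= \sum_(k < n | k != i) (X^T *m X) j j * 0 + \sum_(k < n | k != i) X^T j k * X k j.
  rewrite big1 ?add0r ?mulr0 //; apply: sumr_ge0 => k _; rewrite mxE; nra.
rewrite big1 ?add0r; last by move=> *; rewrite mulr0.
move=> hs; have hii : X i j * X i j <= 1 by rewrite mxE in h; lra.
have [x0|x0] := lerP 0 (X i j); [rewrite ger0_norm | rewrite ltr0_norm]; nra.
Qed.

Lemma intT_D d (T : measurableType d) (R : realType) (mu : {measure set T -> \bar R})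
  (N : set T) (f : T -> R) : measurable N -> mu N = 0%E ->
  measurable_fun setT f -> (forall z, 0 <= f z) ->
  \int[mu]_(z in setT) f z = \int[mu]_(z in ~` N) f z.
Proof.
move=> mN N0 mf f0; congr fine.
have mfe : measurable_fun setT (EFin \o f) by exact/measurable_EFinP.
rewrite -(setvU N) ge0_integral_setU //; last 4 first.
- exact: measurableC.
- by rewrite setvU.
- by move=> z _; rewrite lee_fin.
- by rewrite /disj_set setICl eqxx.
have -> : (\int[mu]_(x in N) (f x)%:E = 0)%E.
  rewrite -(integral_abs_eq0 mN (measurable_funS measurableT (subsetT N) mfe) N0).
  by apply: eq_integral => z _; rewrite /= ger0_norm.
by rewrite adde0.
Qed.

Lemma mcoord_lt (R : realType) n p (i : 'I_n) (j : 'I_p) (c : R) :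
  measurable [set X : rmat R n p | X i j < c] /\ measurable [set X : rmat R n p | c < X i j].
Proof.
split.
- have := coord_mfun i j measurableT (measurable_itv `]-oo, c[); rewrite setTI.
  by congr measurable; apply/seteqP; split => z /=; rewrite in_itv.
- have := coord_mfun i j measurableT (measurable_itv `]c, +oo[); rewrite setTI.
  by congr measurable; apply/seteqP; split => z /=; rewrite in_itv /= andbT.
Qed.

Lemma haar_pos (R : realType) n q (mu : probability (rmat R n.+1 q.+1) R) :
  stiefel_haar mu ->
  (0 < mu [set X : rmat R n.+1 q.+1 | (X ord0 ord0 < 0)%R])%E /\
  (0 < mu [set X : rmat R n.+1 q.+1 | (0 < X ord0 ord0)%R])%E.
Proof.
move=> [[N [mN N0 sN]] inv].
pose Pi (i : 'I_n.+1) := [set X : rmat R n.+1 q.+1 | 0 < X i ord0].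
pose Mi (i : 'I_n.+1) := [set X : rmat R n.+1 q.+1 | X i ord0 < 0].
have mP i : measurable (Pi i) := (@mcoord_lt R _ _ i ord0 0).2.
have mM i : measurable (Mi i) := (@mcoord_lt R _ _ i ord0 0).1.
have eqPM : mu (Mi ord0) = mu (Pi ord0).
  have Qo : ((-1)%:M : 'M[R]_n.+1)^T *m (-1)%:M = 1%:M.
    by rewrite tr_scalar_mx -scalar_mxM mulrNN mulr1.
  rewrite -(inv _ Qo _ (mP ord0)); congr (mu _); apply/seteqP; split => X /=;
    by rewrite /Pi /Mi /= mul_scalar_mx mxE mulN1r oppr_gt0.
have perm_inv i : mu (Pi i) = mu (Pi ord0) /\ mu (Mi i) = mu (Mi ord0).
  pose Q : 'M[R]_n.+1 := perm_mx (perm.tperm ord0 i).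
  have Qo : Q^T *m Q = 1%:M.
    by rewrite /Q tr_perm_mx -perm_mxM fingroup.mulVg perm_mx1.
  have hQ X : (Q *m X) ord0 ord0 = X i ord0.
    by rewrite /Q -row_permE mxE perm.tpermL.
  split.
  - rewrite -(inv _ Qo _ (mP ord0)); congr (mu _); apply/seteqP; split => X /=;
      by rewrite /Pi /Mi /= hQ.
  - rewrite -(inv _ Qo _ (mM ord0)); congr (mu _); apply/seteqP; split => X /=;
      by rewrite /Pi /Mi /= hQ.
suff key : (0 < mu (Pi ord0))%E.
  by split => //; rewrite -eqPM in key.
rewrite lt0e measure_ge0 andbT; apply/negP => /eqP P0.
have Mz : mu (Mi ord0) = 0%E by rewrite eqPM.
pose F (k : nat) := Pi (inord k) `|` Mi (inord k).
have negF : mu.-negligible (\bigcup_k F k).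
  apply: negligible_bigcup => k; apply: negligibleU.
  - exists (Pi (inord k)); split => //; have [h _] := perm_inv (inord k).
    exact: (eq_trans h P0).
  - exists (Mi (inord k)); split => //; have [_ h] := perm_inv (inord k).
    exact: (eq_trans h Mz).
have [A [mA A0 sA]] : mu.-negligible setT.
  have [B [mB B0 sB]] := negF.
  exists (N `|` B); split => //; first exact: measurableU.
    apply/eqP; rewrite eq_le measure_ge0 andbT.
    apply: le_trans (measureU2 mu mN mB) _.
    have N0' : mu N = 0%E := N0; have B0' : mu B = 0%E := B0.
    have -> : (mu N + mu B = 0 + 0)%E by congr (_ + _); [exact: N0' | exact: B0'].
    by rewrite adde0.
  move=> X _; have [XN|XN] := pselect (N X); first by left.
  right; apply: sB.
  have hS : stiefel X by apply: contrapT => nS; apply: XN; exact: sN.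
  have := congr1 (fun M : 'M[R]_q.+1 => M ord0 ord0) hS => /=.
  rewrite !mxE eqxx /= => h.
  have [i Xi] : exists i : 'I_n.+1, X i ord0 != 0.
    apply: contrapT => /forallNP hall.
    have : (0:R) = 1.
      apply: (@eq_trans _ _ (\sum_(j < n.+1) X^T ord0 j * X j ord0)); last exact: h.
      symmetry; apply: big1 => k _; rewrite mxE.
      by have := hall k; move/negP; rewrite negbK => /eqP ->; rewrite mulr0.
    by move/esym/eqP; rewrite oner_eq0.
  exists (val i) => //; rewrite /F inord_val.
  by have [lt|gt|eq0] := ltgtP (X i ord0) 0; [right | left | move: Xi; rewrite eq0 eqxx].
have : mu setT = 0%E.
  have h1 : (mu setT <= mu A)%E.
  rewrite le_measure //; apply/mem_set => //.
  have A0' : mu A = 0%E := A0.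
  apply/eqP; rewrite eq_le measure_ge0 andbT; apply: le_trans h1 _; by rewrite A0'.
move=> h0; have h2 : (mu setT = 1)%E := probability_setT mu.
by move: h2; rewrite h0 => /eqP; rewrite eq_sym onee_eq0.
Qed.

Lemma mu_DS d (T : measurableType d) (R : realType) (mu : {measure set T -> \bar R}) (N S : set T) :
  measurable N -> mu N = 0%E -> measurable S -> mu (~` N `&` S) = mu S.
Proof.
move=> mN N0 mS.
rewrite (measureDI mu mS mN).
have h : mu (S `&` N) = 0%E.
  apply/eqP; rewrite eq_le measure_ge0 andbT -N0.
  by rewrite le_measure //; apply/mem_set => //; exact: measurableI.
rewrite [X in _ = _ + X](_ : _ = 0%E); last exact: h.
by rewrite adde0 setDE setIC.
Qed.

Theorem lemma10 (R : realType) (n q : nat)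
    (mu : probability (rmat R n q.+1) R) (nu : R)
    (eta : 'I_q.+1 -> R) (dr : 'I_q.+1 -> R) (m : R) :
  (q.+1 <= n)%N ->
  stiefel_haar mu ->
  0 < nu ->
  (forall j, eta j < 1) ->
  (forall j : 'I_q.+1, j != ord0 -> 0 < dr j) ->
  is_mode (g1 mu nu eta dr) m ->
  forall b : R, 0 < b ->
  forall x y : R, m < x -> x < y ->
    g1 mu nu eta dr (y + b) / g1 mu nu eta dr y <
    g1 mu nu eta dr (x + b) / g1 mu nu eta dr x.
Proof.
case: n mu => [|n] mu; first by [].
move=> _ hH nu0 _ _ _ b b0 x y _ xy.
have [[N [mN N0 sN]] _] := hH.
have N0' : mu N = 0%E := N0.
pose D := ~` N.
have mD : measurable D by exact: measurableC.
pose u (X : rmat R n.+1 q.+1) := X ord0 ord0.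
pose w (X : rmat R n.+1 q.+1) := Sd (dvec 0 dr) X.
have mu_ : measurable_fun setT u by exact: coord_mfun.
have mw : measurable_fun setT w by exact: Sd_mfun.
have DS X : D X -> stiefel X.
  by move=> DX; apply: contrapT => nS; apply: DX; exact: sN.
have bu X : D X -> `|u X| <= 1 by move=> /DS hS; exact: stiefel_le1.
pose Mw := \sum_(i < n.+1) \sum_(j < q.+1 | (i == j :> nat)) `|dvec 0 dr j|.
have bw X : D X -> `|w X| <= Mw.
  move=> /DS hS; rewrite /w /Sd; apply: le_trans (ler_norm_sum _ _ _) _.
  apply: ler_sum => i _; apply: le_trans (ler_norm_sum _ _ _) _.
  apply: ler_sum => j _; rewrite normrM.
  by rewrite -[leRHS]mulr1 ler_wpM2l // stiefel_le1.
have [hneg hpos] := haar_pos hH.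
have Aneg : (0 < mu (D `&` [set z | (u z < 0)%R]))%E.
  by rewrite mu_DS //; have [] := mcoord_lt (ord0 : 'I_n.+1) (ord0 : 'I_q.+1) (0 : R).
have Apos : (0 < mu (D `&` [set z | (0 < u z)%R]))%E.
  by rewrite mu_DS //; have [] := mcoord_lt (ord0 : 'I_n.+1) (ord0 : 'I_q.+1) (0 : R).
have hF t : hyp0F1 mu (dvec t dr) = \int[mu]_(z in D) expR (t * u z + w z).
  rewrite /hyp0F1 -(intT_D mN N0'); last first.
  - by move=> z; exact: expR_ge0.
  - apply: measurableT_comp => //; apply: measurable_funD => //.
    exact: measurable_funM.
  apply: eq_Rintegral => X _.
  by change (expR (Sd (dvec t dr) X) = expR (t * u X + w X)); rewrite Sd_dvec.
have Fp t := F_pos mD mu_ mw bu bw Aneg t.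
have Fk := F_key mD mu_ mw bu bw Aneg Apos xy b0; simpl in Fk.
rewrite /g1 !hF.
by apply: final_alg => //.
Qed.
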